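(* Let $0<\alpha<1/2$. Then, as $N\to\infty$ through positive integers, \[ \frac{1}{N}\sum_{m,n=1}^{N}\frac{(m,n)^{2\alpha}}{(mn)^{\alpha}} = \frac{\zeta(2-2\alpha)}{\zeta(2)(1-\alpha)^2}\,N^{1-2\alpha}+O(1), \] where the implied constant depends only on $\alpha$.
   Context: $(m,n)$ denotes the greatest common divisor of $m$ and $n$, and $\zeta$ is the Riemann zeta function. *)

(* Defs.v *)
From HB Require Import structures.
From mathcomp Require Import all_boot all_order all_algebra.
From mathcomp Require Import all_classical all_reals all_analysis.
Set Implicit Arguments. Unset Strict Implicit. Unset Printing Implicit Defensive.
Import Order.TTheory GRing.Theory Num.Theory.
Local Open Scope ring_scope.

(* Riemann zeta function at a real argument s (meaningful for s > 1):
   zeta s = \sum_{k >= 1} k^{-s}, as the limit of partial sums. *)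
Definition zeta_real {R : realType} (s : R) : R :=
  limn (fun n : nat => \sum_(1 <= k < n) ((k%:R : R) `^ (- s))).

(* Main.v *)
Require Import Defs.
From HB Require Import structures.
From mathcomp Require Import all_boot all_order all_algebra.
From mathcomp Require Import all_classical all_reals all_analysis.
From mathcomp Require Import ring lra zify.
Import Order.TTheory GRing.Theory Num.Theory numFieldNormedType.Exports.
Local Open Scope ring_scope.
Lemma bernV {R : realType} (b r : R) : b <= 0 -> 0 < r -> 1 + b * (r - 1) <= r `^ b.
Proof.
move=> b0 r0; rewrite /powR gt_eqF //.
apply: le_trans (expR_ge1Dx _); rewrite lerD2l.
apply: ler_wnM2l => //.
have := @le_ln1Dx R (r - 1); rewrite (_ : 1 + (r - 1) = r); last by ring.
by apply; lra.
Qed.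

Lemma bernG {R : realType} (g z : R) : 1 <= g -> 0 < z -> 1 + g * (z - 1) <= z `^ g.
Proof.
move=> g1 z0.
have -> : z `^ g = z * (z^-1) `^ (1 - g).
  rewrite -powR_inv1 ?ltW // -powRrM -{2}(powRr1 (ltW z0)) -powRD; last first.
    by apply/implyP => _; rewrite gt_eqF.
  congr (_ `^ _); ring.
have := @bernV _ (1 - g) z^-1; rewrite subr_le0 invr_gt0 => /(_ g1 z0) H.
have : z * (1 + (1 - g) * (z^-1 - 1)) <= z * (z^-1) `^ (1 - g).
  by rewrite ler_pM2l.
suff -> : z * (1 + (1 - g) * (z^-1 - 1)) = 1 + g * (z - 1) by [].
by field; rewrite gt_eqF.
Qed.

Lemma bernC {R : realType} (b r : R) : 0 <= b <= 1 -> 0 <= r -> r `^ b <= 1 + b * (r - 1).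
Proof.
move=> /andP[b0 b1] r0.
have [->|bn0] := eqVneq b 0; first by rewrite powRr0 mul0r addr0.
have bp : 0 < b by rewrite lt_neqAle eq_sym bn0.
have [->|rn0] := eqVneq r 0; first by rewrite powR0 //; lra.
have rp : 0 < r by rewrite lt_neqAle eq_sym rn0.
set z := r `^ b.
have zp : 0 < z by rewrite powR_gt0.
have g1 : 1 <= b^-1 by rewrite invf_ge1.
have := @bernG _ _ _ g1 zp.
have -> : z `^ b^-1 = r by rewrite /z -powRrM mulfV ?powRr1 // ltW.
move=> H.
have : b * (1 + b^-1 * (z - 1)) <= b * r by rewrite ler_pM2l.
have -> : b * (1 + b^-1 * (z - 1)) = b + (z - 1) by field; rewrite gt_eqF.
lra.
Qed.

Lemma tanC {R : realType} (b x y : R) : 0 <= b <= 1 -> 0 < x -> 0 <= y ->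
  y `^ b <= x `^ b + b * x `^ (b - 1) * (y - x).
Proof.
move=> bb x0 y0.
have ry : y `^ b = x `^ b * (y / x) `^ b.
  rewrite -powRM; [|exact: ltW|exact: divr_ge0 y0 (ltW x0)].
  by rewrite mulrC divfK // gt_eqF.
have := @bernC _ _ _ bb (divr_ge0 y0 (ltW x0)) => H.
have xb : 0 < x `^ b by rewrite powR_gt0.
have -> : x `^ (b - 1) = x `^ b / x.
  rewrite powRB; last by apply/implyP => _; rewrite gt_eqF.
  by rewrite powRr1 // ltW.
have : x `^ b * (y / x) `^ b <= x `^ b * (1 + b * (y / x - 1)) by rewrite ler_pM2l.
rewrite ry.
suff -> : x `^ b * (1 + b * (y / x - 1)) = x `^ b + b * (x `^ b / x) * (y - x) by [].
by field; rewrite gt_eqF.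
Qed.

Lemma tanV {R : realType} (b x y : R) : b <= 0 -> 0 < x -> 0 < y ->
  x `^ b + b * x `^ (b - 1) * (y - x) <= y `^ b.
Proof.
move=> bb x0 y0.
have ry : y `^ b = x `^ b * (y / x) `^ b.
  rewrite -powRM; [|exact: ltW|exact: divr_ge0 (ltW y0) (ltW x0)].
  by rewrite mulrC divfK // gt_eqF.
have := @bernV _ _ _ bb (divr_gt0 y0 x0) => H.
have xb : 0 < x `^ b by rewrite powR_gt0.
have -> : x `^ (b - 1) = x `^ b / x.
  rewrite powRB; last by apply/implyP => _; rewrite gt_eqF.
  by rewrite powRr1 // ltW.
have : x `^ b * (1 + b * (y / x - 1)) <= x `^ b * (y / x) `^ b by rewrite ler_pM2l.
rewrite ry.
suff -> : x `^ b * (1 + b * (y / x - 1)) = x `^ b + b * (x `^ b / x) * (y - x) by [].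
by field; rewrite gt_eqF.
Qed.

Lemma psumC {R : realType} (b : R) (M : nat) : 0 < b < 1 ->
  (M%:R + 1) `^ b - 1 <= b * \sum_(1 <= a < M.+1) (a%:R : R) `^ (b - 1) <= (M%:R) `^ b.
Proof.
move=> /andP[b0 b1]; elim: M => [|M IH].
  rewrite big_geq // mulr0 add0r powR1 subrr lexx /=.
  by rewrite powR0 // gt_eqF.
rewrite big_nat_recr //= -natr1.
have x0 : 0 < (M%:R + 1 : R) by rewrite natr1 ltr0Sn.
have bb : 0 <= b <= 1 by rewrite !ltW.
have := @tanC _ _ _ _ bb x0 (ler0n _ M).
have := @tanC _ _ _ (M%:R + 1 + 1) bb x0.
move=> /(_ ltac:(by rewrite !natr1 ler0n)) H1 H2.
move/andP: IH => [IH1 IH2].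
apply/andP; split; lra.
Qed.

Lemma psumV {R : realType} (b : R) (N d : nat) : b < 0 -> (0 < N)%N ->
  - b * \sum_(N.+1 <= k < (N + d).+1) (k%:R : R) `^ (b - 1) <= (N%:R) `^ b - ((N + d)%:R) `^ b.
Proof.
move=> b0 N0; elim: d => [|d IH].
  by rewrite addn0 big_geq // mulr0 subrr.
rewrite addnS big_nat_recr /=; last by rewrite ltnS leq_addr.
rewrite -[((N + d).+1)%:R]natr1.
have x0 : 0 < ((N + d)%:R + 1 : R) by rewrite natr1 ltr0Sn.
have y0 : 0 < ((N + d)%:R : R) by rewrite ltr0n addn_gt0 N0.
have := @tanV _ _ _ _ (ltW b0) x0 y0.
move=> H; lra.
Qed.

Definition hh {R : realType} (t : R) (k : nat) : R :=
  (k%:R) `^ t * \prod_(q <- primes k) (1 - (q%:R) `^ (- t)).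

Lemma fac_bounds {R : realType} (t : R) q : 0 < t -> (0 < q)%N ->
  0 <= 1 - (q%:R : R) `^ (- t) <= 1.
Proof.
move=> t0 q0.
have q1 : 1 <= (q%:R : R) by rewrite ler1n.
have h1 : 1 <= (q%:R : R) `^ t.
  by have := ler_powR q1 (ltW t0); rewrite powRr0.
have h0 : 0 <= (q%:R : R) `^ (- t) by apply: powR_ge0.
rewrite powRN; rewrite powRN in h0.
have : (q%:R `^ t)^-1 <= 1 by rewrite invf_le1 // (lt_le_trans ltr01).
move=> H; apply/andP; split; lra.
Qed.

Lemma hh_bounds {R : realType} (t : R) k : 0 < t -> 0 <= hh t k <= (k%:R) `^ t.
Proof.
move=> t0; rewrite /hh.
have F q : q \in primes k -> 0 <= 1 - (q%:R : R) `^ (- t) <= 1.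
  by rewrite mem_primes => /and3P[pq _ _]; apply: fac_bounds => //; exact: prime_gt0.
have P0 : 0 <= \prod_(q <- primes k) (1 - (q%:R : R) `^ (- t)).
  by rewrite big_seq; apply: prodr_ge0 => q /F /andP[].
have P1 : \prod_(q <- primes k) (1 - (q%:R : R) `^ (- t)) <= 1.
  by rewrite big_seq; apply: prodr_ile1.
have := powR_ge0 (k%:R : R) t => H.
apply/andP; split; first exact: mulr_ge0.
by rewrite -[X in _ <= X]mulr1 ler_wpM2l.
Qed.

Lemma hh_mulp {R : realType} (t : R) p d : prime p -> (0 < d)%N ->
  hh t (p * d)%N = (if (p %| d)%N then (p%:R) `^ t else (p%:R) `^ t - 1) * hh t d.
Proof.
move=> pp d0; rewrite /hh natrM powRM ?ler0n //.
have p0 := prime_gt0 pp.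
have pt0 : (p%:R : R) `^ t != 0 by rewrite gt_eqF // powR_gt0 // ltr0n.
case: ifP => pd.
  rewrite (perm_big (primes d)) ?mulrA //.
  apply: uniq_perm; rewrite ?primes_uniq // => q.
  rewrite !mem_primes muln_gt0 p0 d0 /=.
  case pq: (prime q) => //=; rewrite Euclid_dvdM // dvdn_prime2 //.
  by case: eqP => //= ->; rewrite pd.
rewrite (perm_big (p :: primes d)) ?big_cons.
  by rewrite /= powRN; set P := \prod_(_ <- _) _; field.
apply: uniq_perm; rewrite ?primes_uniq //=.
  by rewrite primes_uniq mem_primes pd !andbF.
move=> q; rewrite in_cons !mem_primes muln_gt0 p0 d0 /=.
case pq: (prime q); rewrite ?andbF ?orbF //=.
  by rewrite Euclid_dvdM // dvdn_prime2.
by case: (eqVneq q p) => [E|//]; rewrite E pp in pq.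
Qed.

Lemma sum_mult {R : realType} (u : nat -> R) k L : (0 < k)%N ->
  \sum_(1 <= m < L.+1 | (k %| m)%N) u m = \sum_(1 <= a < (L %/ k).+1) u (k * a)%N.
Proof.
move=> k0; elim: L => [|L IH].
  by rewrite div0n !big_geq.
rewrite big_mkcond big_nat_recr //= -big_mkcond IH divnS //.
case: ifP => kd /=; last by rewrite addr0 add0n.
rewrite add1n [RHS]big_nat_recr //=; congr (_ + _).
have E : (L.+1 %/ k = (L %/ k).+1)%N by rewrite divnS // kd.
by rewrite -E mulnC divnK.
Qed.

Lemma sum_shrink {R : realType} (F : nat -> R) (P : pred nat) n K : (0 < n)%N -> (n < K)%N ->
  \sum_(1 <= d < K | (d %| n)%N && P d) F d = \sum_(1 <= d < n.+1 | (d %| n)%N && P d) F d.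
Proof.
move=> n0 nK; rewrite (big_cat_nat _ (n := n.+1)) //= [X in _ + X]big_nat_cond.
rewrite [X in _ + X]big1 ?addr0 // => d /andP[/andP[nd _] /andP[dn _]].
by have := dvdn_leq n0 dn; rewrite leqNgt nd.
Qed.

Lemma Dsum {R : realType} (t : R) n : (0 < n)%N ->
  \sum_(1 <= d < n.+1 | (d %| n)%N) hh t d = (n%:R) `^ t.
Proof.
elim/ltn_ind: n => n IH n0.
have [n1|n1] := leqP n 1.
  have -> : n = 1%N by apply/eqP; rewrite eqn_leq n1 n0.
  rewrite big_mkcond big_nat1 /= /hh /= mulr1n powR1 mul1r.
  by rewrite big_nil.
set p := pdiv n.
have pp : prime p by exact: pdiv_prime.
have p0 := prime_gt0 pp.
set n' := (n %/ p)%N.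
have En : n = (p * n')%N by rewrite mulnC divnK // pdiv_dvd.
have n'0 : (0 < n')%N by rewrite divn_gt0 // pdiv_leq.
have n'n : (n' < n)%N by apply: ltn_Pdiv => //; exact: prime_gt1.
rewrite (bigID (fun d => (p %| d)%N)) /=.
have S2 : \sum_(1 <= d < n.+1 | (d %| n)%N && ~~ (p %| d)%N) hh t d =
          \sum_(1 <= d < n'.+1 | (d %| n')%N && ~~ (p %| d)%N) hh t d.
  rewrite -(@sum_shrink _ _ _ n' n.+1 n'0); last by apply: ltnW.
  apply: eq_bigl => d; case pd: (p %| d)%N; rewrite ?andbF ?andbT //.
  rewrite En Gauss_dvdr // coprime_sym prime_coprime // pd //.
have S1 : \sum_(1 <= d < n.+1 | (d %| n)%N && (p %| d)%N) hh t d =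
   \sum_(1 <= a < n'.+1) (if (a %| n')%N then
       (if (p %| a)%N then (p%:R) `^ t else (p%:R) `^ t - 1) * hh t a else 0).
  rewrite big_mkcondl /= sum_mult // -/n'.
  apply: eq_big_nat => a /andP[a0 _].
  rewrite {1}En dvdn_pmul2l //.
  by case: ifP => // _; rewrite hh_mulp.
rewrite S1 S2 En natrM powRM ?ler0n // -/n' -(IH n') //.
rewrite big_mkcond [X in _ + X]big_mkcond [X in _ * X]big_mkcond -big_split mulr_sumr /=.
apply: eq_big_nat => a _.
by case: (a %| n')%N; case: (p %| a)%N => /=; ring.
Qed.

Lemma Dsum_ext {R : realType} (t : R) g K : (0 < g)%N -> (g < K)%N ->
  \sum_(1 <= d < K | (d %| g)%N) hh t d = (g%:R) `^ t.
Proof.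
move=> g0 gK; rewrite -(@Dsum _ t g g0).
rewrite (eq_bigl (fun d => (d %| g)%N && predT d)); last by move=> d; rewrite andbT.
rewrite sum_shrink //; apply: eq_bigl => d; by rewrite andbT.
Qed.

Lemma term_ident {R : realType} (al : R) N m n : (1 <= m <= N)%N -> (1 <= n <= N)%N ->
  (gcdn m n)%:R `^ (2 * al) / ((m * n)%:R `^ al) =
  \sum_(1 <= k < N.+1) hh (2 * al) k *
     ((if (k %| m)%N then m%:R `^ (- al) else 0) * (if (k %| n)%N then n%:R `^ (- al) else 0)).
Proof.
move=> /andP[m0 mN] /andP[n0 nN].
have g0 : (0 < gcdn m n)%N by rewrite gcdn_gt0 m0.
have gN : (gcdn m n < N.+1)%N by rewrite ltnS (leq_trans (dvdn_leq m0 (dvdn_gcdl m n))).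
rewrite -(@Dsum_ext _ (2 * al) _ _ g0 gN) big_mkcond mulr_suml.
apply: eq_bigr => k _.
rewrite dvdn_gcd.
have -> : ((m * n)%:R `^ al)^-1 = (m%:R : R) `^ (- al) * (n%:R) `^ (- al).
  by rewrite natrM powRM ?ler0n // invfM -!powRN.
by case: (k %| m)%N; case: (k %| n)%N => /=; rewrite ?mul0r ?mulr0.
Qed.

Definition Fs {R : realType} (al : R) (M : nat) : R :=
  \sum_(1 <= a < M.+1) (a%:R : R) `^ (- al).

Lemma colsum {R : realType} (al : R) N k : (0 < k)%N ->
  \sum_(1 <= m < N.+1) (if (k %| m)%N then (m%:R : R) `^ (- al) else 0) =
  (k%:R) `^ (- al) * Fs al (N %/ k).
Proof.
move=> k0; rewrite -big_mkcond sum_mult // /Fs mulr_sumr.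
by apply: eq_bigr => a _; rewrite natrM powRM ?ler0n.
Qed.

Lemma S_ident {R : realType} (al : R) N :
  \sum_(1 <= m < N.+1) \sum_(1 <= n < N.+1)
            ((gcdn m n)%:R `^ (2 * al) / ((m * n)%:R `^ al)) =
  \sum_(1 <= k < N.+1) hh (2 * al) k * ((k%:R) `^ (- al) * Fs al (N %/ k)) ^+ 2.
Proof.
transitivity (\sum_(1 <= m < N.+1) \sum_(1 <= n < N.+1) \sum_(1 <= k < N.+1) hh (2 * al) k *
     ((if (k %| m)%N then (m%:R : R) `^ (- al) else 0) * (if (k %| n)%N then n%:R `^ (- al) else 0))).
  apply: eq_big_nat => m /andP[m0 mN]; apply: eq_big_nat => n /andP[n0 nN].
  by apply: term_ident; apply/andP; split.
under eq_bigr => m _ do rewrite exchange_big /=.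
rewrite exchange_big /=; apply: eq_big_nat => k /andP[k0 _].
under eq_bigr => m _ do rewrite -mulr_sumr -mulr_sumr.
rewrite -mulr_sumr -mulr_suml colsum // colsum //.
Qed.

Definition psum {R : realType} (f : nat -> R) n : R := \sum_(1 <= k < n) f k.
Definition cs {R : realType} (s : R) (k : nat) : R := (k%:R) `^ (- s).

Lemma psum_tail {R : realType} (s : R) (N M : nat) : 1 < s -> (0 < N)%N -> (N < M)%N ->
  psum (cs s) M - psum (cs s) N.+1 <= (N%:R) `^ (1 - s) / (s - 1).
Proof.
move=> s1 N0 NM.
have [d ->] : exists d, M = (N + d).+1.
  by exists (M - N.+1)%N; lia.
rewrite /psum (big_cat_nat _ (n := N.+1)) //= ?ltnS ?leq_addr //.
rewrite addrAC subrr add0r.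
have := @psumV _ (1 - s) N d.
rewrite (_ : 1 - s - 1 = - s); last by ring.
move=> /(_ ltac:(lra) N0) H.
have Hp := powR_ge0 ((N + d)%:R : R) (1 - s).
rewrite ler_pdivlMr; last lra.
rewrite /cs; lra.
Qed.

Lemma psum_bound {R : realType} (s : R) n : 1 < s -> psum (cs s) n <= 1 + (s - 1)^-1.
Proof.
move=> s1.
have s0 : 0 < (s - 1)^-1 by rewrite invr_gt0; lra.
case: n => [|n]; first by rewrite /psum big_geq //; lra.
case: n => [|n]; first by rewrite /psum big_geq //; lra.
have := @psum_tail _ s 1 n.+2 s1 isT isT.
rewrite /psum big_nat1 /cs powR1 => H.
rewrite mul1r in H; lra.
Qed.

Lemma psum_nd {R : realType} (f : nat -> R) : (forall k, (0 < k)%N -> 0 <= f k) ->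
  nondecreasing_seq (psum f).
Proof.
move=> f0 n m nm; rewrite /psum.
case: n nm => [|n] nm.
  by rewrite big_geq // big_nat_cond sumr_ge0 // => i /andP[/andP[i1 _] _]; apply: f0.
rewrite (big_cat_nat _ (n := n.+1) (m := 1%N) (p := m)) //= lerDl.
rewrite big_nat_cond sumr_ge0 // => i /andP[/andP[ni _] _]; apply: f0.
exact: leq_ltn_trans ni.
Qed.

Lemma psum_lim {R : realType} (f : nat -> R) (B : R) : (forall k, (0 < k)%N -> 0 <= f k) ->
  (forall n, psum f n <= B) ->
  [/\ cvgn (psum f), (forall n, psum f n <= limn (psum f)) & limn (psum f) <= B].
Proof.
move=> f0 fB.
have nd := @psum_nd _ _ f0.
have cv : cvgn (psum f).
  by apply: nondecreasing_is_cvgn => //; exists B => _ [n _ <-].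
split => //; first exact: nondecreasing_cvgn_le.
by apply: limr_le => //; apply: nearW.
Qed.

Definition as_ {R : realType} (t : R) (k : nat) : R := hh t k * (k%:R^-1) ^+ 2.

Lemma cs2E {R : realType} (a : nat) : cs 2 a = ((a%:R : R)^-1) ^+ 2.
Proof. by rewrite /cs powR_invn ?ler0n // exprVn. Qed.

Lemma csE {R : realType} (t : R) (n : nat) : (0 < n)%N ->
  cs (2 - t) n = (n%:R) `^ t * (n%:R^-1) ^+ 2.
Proof.
move=> n0; rewrite -cs2E /cs -powRD; last by apply/implyP => _; rewrite pnatr_eq0 -lt0n.
congr (_ `^ _); ring.
Qed.

Lemma as_bounds {R : realType} (t : R) k : 0 < t -> (0 < k)%N -> 0 <= as_ t k <= cs (2 - t) k.
Proof.
move=> t0 k0; rewrite /as_ csE //.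
have /andP[h0 h1] := @hh_bounds _ t k t0.
have e0 : 0 <= ((k%:R : R)^-1) ^+ 2 by rewrite exprn_ge0 // invr_ge0 ler0n.
by rewrite mulr_ge0 //= ler_wpM2r.
Qed.

Lemma C_ident {R : realType} (t : R) M :
  psum (cs (2 - t)) M.+1 = \sum_(1 <= k < M.+1) as_ t k * psum (cs 2) (M %/ k).+1.
Proof.
rewrite /psum.
transitivity (\sum_(1 <= n < M.+1) \sum_(1 <= k < M.+1)
   (if (k %| n)%N then hh t k * ((n%:R : R)^-1) ^+ 2 else 0)).
  apply: eq_big_nat => n /andP[n0 nM].
  rewrite csE // -(@Dsum_ext _ t n M.+1) // -big_mkcond mulr_suml //.
rewrite exchange_big /=; apply: eq_big_nat => k /andP[k0 _].
rewrite -big_mkcond sum_mult // /as_ -mulrA mulr_sumr.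
rewrite [RHS]mulr_sumr; apply: eq_bigr => a _.
by rewrite cs2E natrM invfM exprMn.
Qed.

Lemma hh1 {R : realType} (t : R) : hh t 1 = 1.
Proof. by rewrite /hh /= mulr1n powR1 mul1r big_nil. Qed.

Lemma zeta_prod {R : realType} (t : R) : 0 < t < 1 ->
  [/\ cvgn (psum (as_ t)), (forall n, psum (as_ t) n <= limn (psum (as_ t))),
      1 <= limn (psum (as_ t)), 1 <= zeta_real (2 : R) &
      zeta_real (2 - t) = limn (psum (as_ t)) * zeta_real 2].
Proof.
move=> /andP[t0 t1].
have zE (s : R) : zeta_real s = limn (psum (cs s)) by [].
set A := psum (as_ t); set B := psum (@cs R 2); set C := psum (cs (2 - t)).
have a0 k : (0 < k)%N -> 0 <= as_ t k by move=> k0; have /andP[] := @as_bounds _ t k t0 k0.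
have b0 k : (0 < k)%N -> 0 <= @cs R 2 k by move=> _; apply: powR_ge0.
have c0 k : (0 < k)%N -> 0 <= cs (2 - t) k by move=> _; apply: powR_ge0.
have AC n : A n <= C n.
  rewrite /A /C /psum big_nat_cond [X in _ <= X]big_nat_cond; apply: ler_sum => k /andP[/andP[k0 _] _].
  by have /andP[] := @as_bounds _ t k t0 k0.
have s1 : 1 < 2 - t by lra.
have [cvA leA LAb] := @psum_lim _ _ _ a0 (fun n => le_trans (AC n) (@psum_bound _ _ n s1)).
have [cvB leB LBb] := @psum_lim _ _ _ b0 (fun n => @psum_bound _ 2 n ltac:(lra)).
have [cvC leC LCb] := @psum_lim _ _ _ c0 (fun n => @psum_bound _ _ n s1).
have A2 : A 2 = 1 by rewrite /A /psum big_nat1 /as_ hh1 invr1 expr1n mulr1.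
have B2 : B 2 = 1 by rewrite /B /psum big_nat1 /cs powR1.
have LA1 : 1 <= limn A by rewrite -A2.
have LB1 : 1 <= limn B by rewrite -B2.
have ndA := @psum_nd _ _ a0; have ndB := @psum_nd _ _ b0.
split => //; rewrite !zE -/B -/C.
apply/le_anti/andP; split.
  apply: limr_le => //; apply: nearW => n.
  case: n => [|M]; first by rewrite /C /psum big_geq // mulr_ge0 // (le_trans ler01).
  rewrite /C C_ident.
  apply: (@le_trans _ _ (A M.+1 * limn B)); last by rewrite ler_wpM2r ?leA // (le_trans ler01).
  rewrite /A /psum mulr_suml big_nat_cond [X in _ <= X]big_nat_cond.
  apply: ler_sum => k /andP[/andP[k0 _] _]; apply: ler_wpM2l; first exact: a0.
  exact: leB.
have key K J : (0 < K)%N -> (0 < J)%N -> A K.+1 * B J.+1 <= limn C.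
  move=> K0 J0; apply: limr_ge => //.
  apply: filterS (nbhs_infty_ge (K * J).+1) => n Hn.
  case: n Hn => [//|M] /= Hn.
  rewrite /C C_ident.
  have KM : (K <= M)%N by nia.
  rewrite (big_cat_nat _ (n := K.+1)) //=.
  apply: (@le_trans _ _ (\sum_(1 <= k < K.+1) as_ t k * B (M %/ k).+1)); last first.
    rewrite lerDl big_nat_cond sumr_ge0 // => k /andP[/andP[k0 _] _].
    have kp : (0 < k)%N by rewrite (leq_trans _ k0).
    rewrite mulr_ge0 ?a0 //.
    apply: le_trans (ndB 0%N _ (leq0n _)); by rewrite /B /psum big_geq.
  rewrite /A /psum mulr_suml big_nat_cond [X in _ <= X]big_nat_cond.
  apply: ler_sum => k /andP[/andP[k1 kK] _]; apply: ler_wpM2l; first exact: a0.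
  apply: ndB; rewrite ltnS.
  apply: (leq_trans _ (leq_div2l M k1 kK)).
  by rewrite leq_divRL // mulnC.
have step1 J : (0 < J)%N -> limn A * B J.+1 <= limn C.
  move=> J0.
  have b1 : 1 <= B J.+1 by rewrite -B2; apply: ndB.
  have bp : 0 < B J.+1 by apply: lt_le_trans b1.
  rewrite -ler_pdivlMr //; apply: limr_le => //; apply: nearW => n.
  rewrite ler_pdivlMr //; apply: le_trans (key n.+1 J isT J0).
  apply: ler_wpM2r; [exact: ltW | apply: ndA; exact: leqW (leqnSn n)].
have LAp : 0 < limn A by apply: lt_le_trans LA1.
rewrite mulrC -ler_pdivlMr //; apply: limr_le => //; apply: nearW => n.
rewrite ler_pdivlMr // mulrC; apply: le_trans (step1 n.+1 isT).
apply: ler_wpM2l; [exact: ltW | apply: ndB; exact: leqW (leqnSn n)].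
Qed.

Lemma powRV {R : realType} (x b : R) : 0 <= x -> (x^-1) `^ b = x `^ (- b).
Proof. by move=> x0; rewrite -powR_inv1 // -powRrM mulN1r. Qed.

Lemma Fk_bounds {R : realType} (al : R) N k : 0 < al < 1 -> (0 < k)%N -> (k <= N)%N ->
  [/\ 0 <= Fs al (N %/ k),
      (N%:R / k%:R) `^ (1 - al) - 1 <= (1 - al) * Fs al (N %/ k) &
      (1 - al) * Fs al (N %/ k) <= (N%:R / k%:R) `^ (1 - al)].
Proof.
move=> /andP[a0 a1] k0 kN.
set M := (N %/ k)%N.
have b01 : 0 < 1 - al < 1 by apply/andP; split; lra.
have := @psumC _ (1 - al) M b01.
rewrite (_ : 1 - al - 1 = - al); last by ring.
rewrite -/(Fs al M) => /andP[H1 H2].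
have kp : 0 < (k%:R : R) by rewrite ltr0n.
have My : (M%:R : R) <= N%:R / k%:R.
  by rewrite ler_pdivlMr // -natrM ler_nat leq_trunc_div.
have yM : (N%:R / k%:R : R) <= M%:R + 1.
  rewrite ler_pdivrMr // natr1 -natrM ler_nat; apply: ltnW; exact: ltn_ceil.
have bb : 0 <= 1 - al by lra.
have y0 : 0 <= (N%:R / k%:R : R) by rewrite divr_ge0 ?ler0n.
have e1 := ge0_ler_powR bb (ler0n _ M) y0 My.
have e2 := ge0_ler_powR bb y0 (_ : 0 <= M%:R + 1) yM.
have F0 : 0 <= Fs al M by rewrite /Fs sumr_ge0 // => i _; apply: powR_ge0.
split => //.
  have := e2 ltac:(by rewrite natr1 ler0n); lra.
lra.
Qed.

Lemma term_err {R : realType} (al : R) N k : 0 < al < 1 -> (0 < k)%N -> (k <= N)%N ->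
  `| hh (2 * al) k * ((k%:R) `^ (- al) * Fs al (N %/ k)) ^+ 2
     - ((N%:R) `^ (1 - al)) ^+ 2 / (1 - al) ^+ 2 * as_ (2 * al) k |
  <= 2 / (1 - al) ^+ 2 * ((N%:R) `^ (1 - al) * (k%:R) `^ (- (1 - al))).
Proof.
move=> aa k0 kN.
have /andP[a0 a1] := aa.
have [F0 HF1 HF2] := @Fk_bounds _ al N k aa k0 kN.
set F := Fs al (N %/ k) in F0 HF1 HF2 *.
have kp : 0 < (k%:R : R) by rewrite ltr0n.
set b := 1 - al.
have bp : 0 < b by rewrite /b; lra.
have YE : (N%:R / k%:R : R) `^ b = (N%:R) `^ b * (k%:R) `^ (- b).
  by rewrite powRM ?ler0n ?invr_ge0 ?ler0n // powRV ?ler0n.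
rewrite YE in HF1 HF2.
set Y := (N%:R) `^ b * (k%:R) `^ (- b) in HF1 HF2 *.
set w := hh (2 * al) k * ((k%:R) `^ (- al)) ^+ 2.
have kaN : (k%:R : R) `^ (- al) = ((k%:R) `^ al)^-1 by rewrite powRN.
have ka0 : 0 < (k%:R : R) `^ al by rewrite powR_gt0.
have w0 : 0 <= w by rewrite /w mulr_ge0 ?exprn_ge0 ?powR_ge0 //; have /andP[] := @hh_bounds _ (2 * al) k ltac:(lra).
have w1 : w <= 1.
  have /andP[_ h1] := @hh_bounds _ (2 * al) k ltac:(lra).
  have E : (k%:R : R) `^ (2 * al) = ((k%:R) `^ al) ^+ 2.
    by rewrite -powR_mulrn ?powR_ge0 // -powRrM mulrC.
  rewrite /w kaN E in h1 *.
  apply: (le_trans (ler_wpM2r _ h1)); first by rewrite exprn_ge0 // invr_ge0 ltW.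
  by rewrite exprVn mulfV // expf_eq0 gt_eqF.
have E1 : hh (2 * al) k * ((k%:R) `^ (- al) * F) ^+ 2 = w * F ^+ 2.
  by rewrite /w exprMn mulrA.
have E2 : ((N%:R) `^ b) ^+ 2 / b ^+ 2 * as_ (2 * al) k = w * (Y / b) ^+ 2.
  rewrite /w /Y /as_.
  have -> : (k%:R : R)^-1 = (k%:R) `^ (- al) * (k%:R) `^ (- b).
    rewrite -powRD; last by apply/implyP => _; rewrite gt_eqF.
    rewrite -powR_inv1 ?ler0n //; congr (_ `^ _); rewrite /b; ring.
  rewrite !exprMn; field; lra.
rewrite E1 E2.
have Y0 : 0 <= Y by rewrite /Y mulr_ge0 ?powR_ge0.
have b2 : 0 < b ^+ 2 by rewrite exprn_gt0.
have D : 0 <= Y ^+ 2 - (b * F) ^+ 2 <= 2 * Y.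
  have X0 : 0 <= b * F by rewrite mulr_ge0 // ltW.
  set X := b * F in X0 HF1 HF2 *.
  have P1 : 0 <= (Y - X) * (Y + X) by rewrite mulr_ge0 //; lra.
  have P2 : 0 <= (1 - (Y - X)) * (Y + X) by rewrite mulr_ge0 //; lra.
  apply/andP; split; nra.
rewrite (_ : w * F ^+ 2 - w * (Y / b) ^+ 2 = - (w * (Y ^+ 2 - (b * F) ^+ 2) / b ^+ 2)); last first.
  by field; lra.
case/andP: D => D1 D2.
have Q : 0 <= w * (Y ^+ 2 - (b * F) ^+ 2) / b ^+ 2.
  by apply: divr_ge0; [exact: mulr_ge0 | exact: ltW].
rewrite normrN (ger0_norm Q).
rewrite ler_pdivrMr //.
have -> : 2 / b ^+ 2 * Y * b ^+ 2 = 2 * Y by field; rewrite gt_eqF.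
nra.
Qed.

Lemma A_tail {R : realType} (t : R) N : 0 < t < 1 -> (0 < N)%N ->
  0 <= limn (psum (as_ t)) - psum (as_ t) N.+1 <= (N%:R) `^ (t - 1) / (1 - t).
Proof.
move=> tt N0; have /andP[t0 t1] := tt.
have [cvA leA _ _ _] := @zeta_prod _ t tt.
have a0 k : (0 < k)%N -> 0 <= as_ t k by move=> k0; have /andP[] := @as_bounds _ t k t0 k0.
have ndA := @psum_nd _ _ a0.
apply/andP; split; first by rewrite subr_ge0.
have bd0 : 0 <= (N%:R : R) `^ (t - 1) / (1 - t) by rewrite divr_ge0 ?powR_ge0 //; lra.
rewrite lerBlDl; apply: limr_le => //; apply: nearW => M.
have [MN|NM] := leqP M N.+1.
  by apply: le_trans (ndA _ _ MN) _; rewrite lerDl.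
rewrite -lerBlDl.
apply: (@le_trans _ _ (psum (cs (2 - t)) M - psum (cs (2 - t)) N.+1)).
  rewrite /psum (big_cat_nat _ (n := N.+1) (m := 1%N) (p := M)) //=; last exact: ltnW.
  rewrite [X in _ <= X - _](big_cat_nat _ (n := N.+1) (m := 1%N) (p := M)) //=; last exact: ltnW.
  rewrite addrAC subrr add0r [X in _ <= X]addrAC subrr add0r.
  rewrite big_nat_cond [X in _ <= X]big_nat_cond.
  apply: ler_sum => k /andP[/andP[k1 _] _].
  by have /andP[] := @as_bounds _ t k t0 (leq_trans (ltn0Sn _) k1).
have := @psum_tail _ (2 - t) N M ltac:(lra) N0 (ltnW NM).
have E1 : 1 - (2 - t) = t - 1 by ring.
have E2 : 2 - t - 1 = 1 - t by ring.
by rewrite E1 E2.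
Qed.

Lemma fieldaux {R : realType} (x y c d : R) : c != 0 -> d != 0 -> x * y = 1 ->
  x / d * (y / c) = 1 / (c * d).
Proof.
move=> c0 d0 xy.
have -> : x / d * (y / c) = (x * y) / (c * d) by field; rewrite c0 d0.
by rewrite xy.
Qed.

Theorem mainTheorem3 (R : realType) (alpha : R) :
  0 < alpha -> alpha < 1 / 2 ->
  exists C : R, forall N : nat, (0 < N)%N ->
    `| (N%:R)^-1 *
         (\sum_(1 <= m < N.+1) \sum_(1 <= n < N.+1)
            ((gcdn m n)%:R `^ (2 * alpha) / ((m * n)%:R `^ alpha)))
       - zeta_real (2 - 2 * alpha) / (zeta_real 2 * (1 - alpha) ^+ 2)
           * (N%:R `^ (1 - 2 * alpha)) | <= C.
Proof.
move=> a0 ah.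
have tt : 0 < 2 * alpha < 1 by apply/andP; split; lra.
have aa : 0 < alpha < 1 by apply/andP; split; lra.
have [cvA leA LA1 Z1 Zeq] := @zeta_prod _ (2 * alpha) tt.
set LA := limn (psum (as_ (2 * alpha))) in leA LA1 Zeq.
set b := 1 - alpha.
have bp : 0 < b by rewrite /b; lra.
have b2 : 0 < b ^+ 2 by rewrite exprn_gt0.
exists (2 / (alpha * b ^+ 2) + 1 / ((1 - 2 * alpha) * b ^+ 2)).
move=> N N0.
rewrite S_ident.
have Np : 0 < (N%:R : R) by rewrite ltr0n.
set Sx := \sum_(1 <= k < N.+1) _.
set MT := ((N%:R) `^ b) ^+ 2 / b ^+ 2 * psum (as_ (2 * alpha)) N.+1.
have E1 : `| Sx - MT | <= 2 / (alpha * b ^+ 2) * N%:R.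
  rewrite /MT /psum mulr_sumr /Sx -sumrB.
  apply: le_trans (ler_norm_sum _ _ _) _.
  apply: (@le_trans _ _ (\sum_(1 <= k < N.+1) 2 / b ^+ 2 * ((N%:R) `^ b * (k%:R) `^ (- b)))).
    rewrite big_nat_cond [X in _ <= X]big_nat_cond.
    apply: ler_sum => k /andP[/andP[k1 kN] _].
    exact: term_err.
  rewrite -mulr_sumr -mulr_sumr.
  have := @psumC _ alpha N aa.
  rewrite (_ : alpha - 1 = - b); last by rewrite /b; ring.
  move=> /andP[_ H].
  have NN : (N%:R : R) `^ b * (N%:R) `^ alpha = N%:R.
    rewrite -powRD; last by apply/implyP => _; rewrite gt_eqF.
    by rewrite /b (_ : 1 - alpha + alpha = 1) ?powRr1 ?ler0n //; ring.
  have Nb0 : 0 < (N%:R : R) `^ b by rewrite powR_gt0.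
  set T := \sum_(1 <= i < N.+1) _ in H *.
  have : (N%:R : R) `^ b * T <= N%:R / alpha.
    rewrite ler_pdivlMr //.
    have Hm : (N%:R : R) `^ b * (alpha * T) <= (N%:R) `^ b * (N%:R) `^ alpha by rewrite ler_pM2l.
    rewrite NN in Hm.
    by have -> : (N%:R : R) `^ b * T * alpha = (N%:R) `^ b * (alpha * T) by ring.
  move=> HT.
  rewrite (_ : 2 / (alpha * b ^+ 2) * N%:R = 2 / b ^+ 2 * (N%:R / alpha)); last first.
    by field; rewrite !gt_eqF.
  by rewrite ler_pM2l // divr_gt0.
have Z0 : zeta_real (2 : R) != 0 by rewrite gt_eqF // (lt_le_trans ltr01).
rewrite Zeq.
have -> : LA * zeta_real 2 / (zeta_real 2 * (1 - alpha) ^+ 2) = LA / b ^+ 2.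
  rewrite /b; field.
  by rewrite Z0 andbT; apply/negP => /eqP; lra.
set P := (N%:R : R) `^ (1 - 2 * alpha).
have P0 : 0 < P by rewrite powR_gt0.
have NP : ((N%:R : R) `^ b) ^+ 2 = P * N%:R.
  rewrite expr2 -powRD; last by apply/implyP => _; rewrite gt_eqF.
  rewrite -{2}(powRr1 (ler0n _ N)) /P -powRD; last by apply/implyP => _; rewrite gt_eqF.
  by congr (_ `^ _); rewrite /b; ring.
have PQ : P * (N%:R) `^ (2 * alpha - 1) = 1.
  rewrite /P -powRD; last by apply/implyP => _; rewrite gt_eqF.
  by rewrite (_ : 1 - 2 * alpha + (2 * alpha - 1) = 0) ?powRr0 //; ring.
have /andP[T1 T2] := @A_tail _ (2 * alpha) N tt N0.
rewrite -/LA in T1 T2.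
set AN := psum (as_ (2 * alpha)) N.+1 in T1 T2 *.
have MTE : (N%:R)^-1 * MT = P / b ^+ 2 * AN.
  rewrite /MT /AN NP; field.
  by rewrite !gt_eqF.
have -> : (N%:R)^-1 * Sx - LA / b ^+ 2 * P = (N%:R)^-1 * (Sx - MT) + P / b ^+ 2 * (AN - LA).
  rewrite mulrBr MTE; field.
  by rewrite !gt_eqF.
apply: le_trans (ler_normD _ _) _; apply: lerD.
  rewrite normrM ger0_norm ?invr_ge0 ?ler0n //.
  rewrite ler_pdivrMl //; apply: le_trans E1 _.
  by rewrite mulrC.
rewrite normrM ger0_norm ?divr_ge0 ?(ltW P0) ?(ltW b2) //.
rewrite distrC ger0_norm //.
have := ler_wpM2l (divr_ge0 (ltW P0) (ltW b2)) T2.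
move=> H; apply: le_trans H _.
rewrite le_eqVlt; apply/orP; left; apply/eqP.
have o : 1 - 2 * alpha != 0 by apply/negP => /eqP; lra.
by apply: fieldaux => //; rewrite gt_eqF.
Qed.
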